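(* (Strong Parity Theorem.) Let $\mathcal U\in\mathcal L(\mathcal A_{\mathsf P})$ be a subspace whose defining move equations involve $\kappa$ pieces, and suppose the quasipolynomial $\alpha(\mathcal U;n)$ has period $p$. Then the number of values of $\alpha(\mathcal U;n)$ that are sufficient to determine all the coefficients in all constituents of $\alpha(\mathcal U;n)$ is $\lceil p(\kappa-\tfrac12\operatorname{codim}\mathcal U)\rceil+\epsilon$, where $\epsilon=1$ if $\operatorname{codim}\mathcal U$ is even and $\epsilon=0$ if it is odd.
   Context: A rider piece $\mathsf P$ has a finite set $\mathcal M$ of basic moves: nonzero integer vectors $m=(c,d)$ with $\gcd(c,d)=1$, no two parallel. For $q$ pieces, configurations are points $(z_1,\dots,z_q)\in\mathbb R^{2q}$, $z_i=(x_i,y_i)$. The move arrangement $\mathcal A_{\mathsf P}$ consists of the hyperplanes $\mathcal H^{d/c}_{ij}=\{(z_1,\dots,z_q):(z_j-z_i)\cdot(d,-c)=0\}$ for $i<j$ and $(c,d)\in\mathcal M$; $\mathcal L(\mathcal A_{\mathsf P})$ is the set of intersections of subsets of these hyperplanes. For $\mathcal U\in\mathcal L(\mathcal A_{\mathsf P})$ involving a set of $\kappa$ pieces, its essential part $\tilde{\mathcal U}\subseteq\mathbb R^{2\kappa}$ is the subspace defined by the same move equations in the coordinates of those $\kappa$ pieces, and $\alpha(\mathcal U;n)$ is the number of integral points in $(n+1)\cdot\big((0,1)^{2\kappa}\cap\tilde{\mathcal U}\big)$. It is known (Ehrhart theory) that $\alpha(\mathcal U;n)$ is a quasipolynomial in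 $n$ of degree $d=2\kappa-\operatorname{codim}\mathcal U$ whose leading coefficient is the same known constant for all constituents, and (parity/reciprocity) that its constituents $\alpha_0,\dots,\alpha_{p-1}$ (with $\alpha(n)=\alpha_{n\bmod p}(n)$, indices mod $p$) satisfy $\alpha_{-i}(-n)=(-1)^d\alpha_i(n)$. *)

(* Defs.v *)
From HB Require Import structures.
From mathcomp Require Import all_boot all_order all_algebra.
Unset Printing Implicit Defensive.
Import Order.TTheory GRing.Theory Num.Theory.
Local Open Scope ring_scope.

(* A rider piece is given by its list of basic moves (c,d). *)
Definition move_of (M : seq (int * int)) (k : 'I_(size M)) : int * int :=
  nth (0, 0) M k.

Definition valid_moves (M : seq (int * int)) : Prop :=
  (forall m, m \in M -> gcdz m.1 m.2 = 1) /\
  (forall k l : 'I_(size M), k != l ->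
     (move_of M k).1 * (move_of M l).2 - (move_of M l).1 * (move_of M k).2 != 0).

(* Index (i, j, k) of the hyperplane H^{d/c}_{ij} with (c,d) = k-th move. *)
Definition hyp (q : nat) (M : seq (int * int)) : Type :=
  ('I_q * 'I_q * 'I_(size M))%type.

Definition on_hyp {q : nat} {M : seq (int * int)} (h : hyp q M)
    (x y : 'I_q -> int) : bool :=
  let: (i, j, k) := h in
  let: (c, d) := move_of M k in
  (x j - x i) * d - (y j - y i) * c == 0.

Arguments move_of : clear implicits.
Definition involved {q : nat} {M : seq (int * int)} (S : {set hyp q M})
    (i : 'I_q) : bool :=
  [exists h in S, (h.1.1 == i) || (h.1.2 == i)].

Definition kappa {q : nat} {M : seq (int * int)} (S : {set hyp q M}) : nat :=
  #|[set i | involved S i]|.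

(* Normal vector of a hyperplane in Q^{2q}: columns lshift = x-coords,
   rshift = y-coords. *)
Definition normal_vec {q : nat} {M : seq (int * int)} (h : hyp q M) :
    'rV[rat]_(q + q) :=
  let: (i, j, k) := h in
  let: (c, d) := move_of M k in
  \row_(col < q + q)
    match split col with
    | inl a => d%:~R * ((a == j)%:R - (a == i)%:R)
    | inr b => - c%:~R * ((b == j)%:R - (b == i)%:R)
    end.

(* codim of U = intersection of the hyperplanes in S (rank of normals). *)
Definition codim {q : nat} {M : seq (int * int)} (S : {set hyp q M}) : nat :=
  \rank (\matrix_(r < #|S|) normal_vec (@enum_val _ (mem S) r)).

(* alpha(U; n): integral points of (n+1)((0,1)^{2 kappa} cap U~), i.e.
   placements of the involved pieces on {1..n}^2 satisfying the equations
   of S (uninvolved pieces are fixed at (0,0), so they are not counted). *)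
Definition alpha {q : nat} {M : seq (int * int)} (S : {set hyp q M})
    (n : nat) : nat :=
  #|[set f : {ffun 'I_q -> 'I_n.+1 * 'I_n.+1} |
      [forall i, if involved S i then (0 < (f i).1)%N && (0 < (f i).2)%N
                 else f i == (ord0, ord0)] &&
      [forall h in S, on_hyp h (fun i => ((f i).1 : nat)%:Z)
                               (fun i => ((f i).2 : nat)%:Z)]]|.

(* Main.v *)
Require Import Defs.
From HB Require Import structures.
From mathcomp Require Import all_boot all_order all_algebra.
From mathcomp Require Import zify ring lra.
Import Order.TTheory GRing.Theory Num.Theory.
Lemma M1 (p i N n k : nat) : (i < p)%N ->
  (n + (N-1) = (i + (N-1)) %% p + k * p)%N -> (n %% p = i)%N.
Proof. move=> Hi E.
have h : n + (N-1) = i + (N-1) %[mod p].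
  by rewrite E modnDml [_ + k * p]addnC modnMDl.
by move/eqP: h; rewrite eqn_modDr (modn_small Hi) => /eqP.
Qed.
Lemma M2 (p i N n k : nat) : (0 < p)%N -> (i < p)%N ->
  (n + ((i + (N-1)) %% p + k * p) = N-1)%N -> (n %% p = (p - i) %% p)%N.
Proof. move=> Hp Hi E.
have h1 : n + i + (N-1) = 0 + (N-1) %[mod p].
  by rewrite add0n -{2}E -addnA (addnC _ (k * p)) (addnC n (k * p + _)) -addnA modnMDl addnC modnDml.
have h2 : n + i = (p - i) + i %[mod p].
  by move/eqP: h1; rewrite eqn_modDr => /eqP ->; rewrite (subnK (ltnW Hi)) modnn mod0n.
by move/eqP: h2; rewrite eqn_modDr => /eqP.
Qed.
Arguments M1 {p i N n k}.
Arguments M2 {p i N n k}.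
Lemma MM (p i : nat) : (0 < p)%N -> (i < p)%N -> ((p - (p - i) %% p) %% p = i)%N.
Proof.
move=> Hp Hi; case: (posnP i) => [->|ip].
  by rewrite subn0 modnn subn0 modnn.
rewrite (modn_small (_ : p - i < p)%N); last by lia.
by rewrite subKn ?(ltnW Hi) // modn_small.
Qed.

Lemma half_i (p i q e : nat) : (0 < p)%N -> (i < p)%N ->
  (2 * i + p * (2 * e) + p = p * (2 * q))%N -> (2 * i = p)%N.
Proof.
move=> Hp Hi E.
case: (ltngtP q (e + 1)) => H.
- have : (p * (2 * q) <= p * (2 * e))%N by rewrite leq_mul2l; apply/orP; right; lia.
  lia.
- have : (p * (2 * e) + 4 * p <= p * (2 * q))%N.
    have : (p * (2 * (e + 2)) <= p * (2 * q))%N by rewrite leq_mul2l; apply/orP; right; lia.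
    by rewrite !mulnDr; lia.
  lia.
- subst q. move: E; rewrite !mulnDr. lia.
Qed.

Local Open Scope ring_scope.

Lemma key (p d N : nat) (D : nat -> {poly rat}) :
 (0 < p)%N ->
 (forall i, (i < p)%N -> (size (D i) <= d)%N) ->
 (forall i, (i < p)%N -> forall x, (D ((p - i) %% p)%N).[-x] = (-1)^+d * (D i).[x]) ->
 (forall n, (n < N)%N -> (D (n %% p)%N).[n%:R] = 0) ->
 (d = 0 \/ p * d < 2*N \/ (odd d /\ p * d <= 2*N))%N ->
 forall i, (i < p)%N -> D i = 0.
Proof.
move=> Hp Hs Hr Hz Hc i Hi.
case: (eqVneq (D i) 0) => // Dn0; exfalso.
have Hsi := Hs i Hi.
have [d0|dpos] := posnP d.
  by move: Hsi; rewrite d0 leqn0 size_poly_eq0 (negbTE Dn0).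
have pdp : (p <= p * d)%N by rewrite leq_pmulr.
have Npos : (0 < N)%N by lia.
set r := ((i + (N-1)) %% p)%N.
have Hrp : (r < p)%N by rewrite ltn_pmod.
pose z := fun k : nat => (r + k * p)%:R - (N-1)%:R : rat.
have Hroot : forall k, (r + k * p <= 2*(N-1))%N -> (D i).[z k] = 0.
  move=> k Hk; case: (leqP (N-1) (r+k * p)) => H.
  - have En : (r + k * p - (N-1) + (N-1) = r + k * p)%N by rewrite subnK.
    have -> : z k = (r + k * p - (N-1))%:R by rewrite /z -{1}En natrD addrK.
    have nN : (r + k * p - (N-1) < N)%N by lia.
    by have := Hz _ nN; rewrite (M1 Hi En).
  - have En : ((N-1) - (r + k * p) + (r + k * p) = N-1)%N by rewrite subnK // ltnW.
    have -> : z k = - ((N-1) - (r + k * p))%:R.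
      by rewrite /z -{1}En natrD; ring.
    have nN : ((N-1) - (r + k * p) < N)%N by lia.
    have := Hz _ nN; rewrite (M2 Hp Hi En) => h0.
    have := Hr ((p-i)%%p)%N (ltn_pmod _ Hp) ((N-1) - (r + k * p))%:R.
    by rewrite h0 mulr0 MM.
have zinj : injective z.
  move=> k1 k2; rewrite /z => /(congr1 (fun x => x + (N-1)%:R)); rewrite !subrK.
  move/eqP; rewrite eqr_nat eqn_add2l eqn_pmul2r // => /eqP.
  done.
have Hmul : forall k, (r + (k+1) * p = r + k * p + p)%N by move=> k; rewrite mulnDl mul1n addnA.
case: (leqP (r + (d-1) * p) (2*(N-1))) => HA.
- have := @max_poly_roots _ (D i) [seq z k | k <- iota 0 d] Dn0.
  rewrite size_map size_iota map_inj_uniq // iota_uniq.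
  have -> : all (root (D i)) [seq z k | k <- iota 0 d].
    apply/allP => x /mapP [k]; rewrite mem_iota => /andP [_ kd] ->.
    rewrite /root Hroot //; apply: leq_trans HA.
    by rewrite leq_add2l leq_mul2r; apply/orP; right; lia.
  by move=> /(_ isT isT) h; move: (leq_trans h Hsi); rewrite ltnn.
- have Ed : ((d - 1) * p = p * d - p)%N by rewrite mulnBl mul1n mulnC.
  have [Hodd HN] : odd d /\ (p * d = 2 * N)%N /\ (r = p - 1)%N.
    rewrite Ed in HA; clear Hroot zinj Hmul; case: Hc => [|[]]; try lia.
  case: HN => HN Hr1.
  have Hdq := divn_eq (i + (N - 1)) p.
  have Hdd := odd_double_half d; rewrite Hodd in Hdd.
  have H2i : (2 * i = p)%N.
    apply: (@half_i p i ((i + (N - 1)) %/ p).+1 d./2 Hp Hi).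
    move: Hdq; rewrite -/r Hr1 => Hdq.
    have E2 : (i + N = ((i + (N - 1)) %/ p).+1 * p)%N by rewrite mulSn; lia.
    have Hpd : (p * d = p * (2 * d./2) + p)%N.
      by rewrite -[in LHS]Hdd /= -muln2 mulnDr muln1 (mulnC _ 2) addnC.
    move: E2 Hpd HN; clear; nia.
  have i0 : (i != 0)%N by lia.
  have Hpi : ((p - i) %% p = i)%N by rewrite modn_small; lia.
  have Hoddp : forall x, (D i).[-x] = - (D i).[x].
    by move=> x; have := Hr i Hi x; rewrite Hpi -signr_odd Hodd expr1 mulN1r.
  have H0 : (D i).[0] = 0.
    have := Hoddp 0; rewrite oppr0 => h; lra.
  have := @max_poly_roots _ (D i) (0 :: [seq z k | k <- iota 0 d.-1]) Dn0.
  rewrite /= size_map size_iota map_inj_uniq // iota_uniq andbT.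
  have -> : 0 \notin [seq z k | k <- iota 0 d.-1].
    apply/negP => /mapP [k _] /esym.
    rewrite /z => /(congr1 (fun x => x + (N-1)%:R)); rewrite subrK add0r.
    move/eqP; rewrite eqr_nat => /eqP /esym En.
    have := @M1 p i N 0 k Hi; rewrite add0n -/r => /(_ En) /esym.
    by rewrite mod0n; apply/eqP.
  have -> : root (D i) 0 by rewrite /root H0.
  have -> : all (root (D i)) [seq z k | k <- iota 0 d.-1].
    apply/allP => x /mapP [k]; rewrite mem_iota => /andP [_ kd] ->.
    rewrite /root Hroot //.
    have : ((k + 1) * p <= (d - 1) * p)%N by rewrite leq_mul2r; apply/orP; right; lia.
    rewrite Ed mulnDl mul1n. lia.
  by move=> /(_ isT isT) h; move: (leq_trans h Hsi); rewrite prednK // ltnn.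
Qed.

Theorem theorem2p1 (M : seq (int * int)) (q : nat) (S : {set hyp q M})
    (p : nat) (A : nat -> {poly rat}) :
  valid_moves M ->
  (forall h, h \in S -> (h.1.1 < h.1.2)%N) ->
  (0 < p)%N ->
  let c := codim S in
  let d := (2 * kappa S - c)%N in
  (forall n : nat, (alpha S n)%:R = (A (n %% p)%N).[n%:R]) ->
  (forall i, (i < p)%N -> size (A i) = d.+1) ->
  (forall i j, (i < p)%N -> (j < p)%N -> lead_coef (A i) = lead_coef (A j)) ->
  (forall i, (i < p)%N -> forall x : rat,
      (A ((p - i) %% p)%N).[- x] = (-1) ^+ d * (A i).[x]) ->
  let N := ((p * d).+1./2 + (if odd c then 0 else 1))%N in
  forall B : nat -> {poly rat},
    (forall i, (i < p)%N -> (size (B i) <= d.+1)%N) ->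
    (forall i, (i < p)%N -> (B i)`_d = lead_coef (A 0%N)) ->
    (forall i, (i < p)%N -> forall x : rat,
        (B ((p - i) %% p)%N).[- x] = (-1) ^+ d * (B i).[x]) ->
    (forall n : nat, (n < N)%N -> (alpha S n)%:R = (B (n %% p)%N).[n%:R]) ->
    forall i, (i < p)%N -> B i = A i.
Proof.
move=> _ _ Hp c d HA HsA Hlc HrA N B HsB HcB HrB HB i Hi.
apply/eqP; rewrite -subr_eq0; apply/eqP.
apply: (@key p d N (fun j => B j - A j)) => //.
- move=> j Hj; apply/leq_sizeP => k kd; rewrite coefB.
  case: (ltngtP k d) => Hk; first by lia.
  + have /leq_sizeP hB := HsB j Hj; have hA : (size (A j) <= d.+1)%N by rewrite HsA.
    move/leq_sizeP: hA => hA.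
    by rewrite hB // hA // subrr.
  + by subst k; rewrite HcB // (Hlc 0%N j) // lead_coefE HsA //= subrr.
- move=> j Hj x; rewrite !hornerD !hornerN HrA // HrB // mulrBr.
  done.
- move=> n Hn; rewrite hornerD hornerN -HA -HB // subrr.
  done.
- have Hh := odd_double_half (p * d).+1.
  rewrite /N; case: (boolP (odd c)) => Hc.
  + case: (posnP d) => d0; [by left|right; right; split].
    * rewrite /d oddB; last by rewrite /d in d0; lia.
      by rewrite Hc oddM.
    * move: Hh; rewrite -muln2 addn0; case: (odd _) => /=; lia.
  + right; left. move: Hh; rewrite -muln2; case: (odd _) => /=; lia.
Qed.
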